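(* Let $\mu\in[0,1)$ and $\sigma>1$. For $Z\in[0,1]$ let \[ \delta(Z)=1-\frac{\mu}{\sigma}Z-\frac{\sigma-1}{\sigma}Z^2,\quad A(Z)=\frac{1}{\delta(Z)}\left[1+\frac{\mu}{\sigma-1}Z-\left(1+\frac{\mu^2}{\sigma-1}\right)Z^2\right],\quad B(Z)=-\frac{(\mu Z-1)^2}{\delta(Z)}, \] and let \[ Z^*=\frac{\mu(2\sigma-1)}{\sigma(1+\mu^2)-1}. \] Then for $Z\in(0,1]$: $A(Z)+B(Z)>0$ if $Z<Z^*$, and $A(Z)+B(Z)<0$ if $Z>Z^*$.
   Context: One has $\delta(Z)>0$ for all $Z\in[0,1]$, so $A$ and $B$ are well defined there. *)

(* Defs.v *)
From Stdlib Require Import Reals Lra.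
Open Scope R_scope.

Definition delta (mu sigma Z : R) : R :=
  1 - (mu / sigma) * Z - ((sigma - 1) / sigma) * Z ^ 2.

Definition Afun (mu sigma Z : R) : R :=
  (1 / delta mu sigma Z) *
  (1 + (mu / (sigma - 1)) * Z - (1 + mu ^ 2 / (sigma - 1)) * Z ^ 2).

Definition Bfun (mu sigma Z : R) : R :=
  - ((mu * Z - 1) ^ 2) / delta mu sigma Z.

Definition Zstar (mu sigma : R) : R :=
  mu * (2 * sigma - 1) / (sigma * (1 + mu ^ 2) - 1).

(* Main.v *)
Require Import Defs.
From Stdlib Require Import Reals Lra Psatz.
Open Scope R_scope.

Theorem lemma3 (mu sigma : R) (Hmu0 : 0 <= mu) (Hmu1 : mu < 1) (Hsigma : 1 < sigma) :
  forall Z : R, 0 < Z <= 1 ->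
    (Z < Zstar mu sigma -> Afun mu sigma Z + Bfun mu sigma Z > 0) /\
    (Z > Zstar mu sigma -> Afun mu sigma Z + Bfun mu sigma Z < 0).
Proof.
  intros Z [HZ0 HZ1].
  set (DD := sigma * (1 + mu ^ 2) - 1).
  assert (HD : 0 < DD) by (unfold DD; nra).
  assert (Hd : 0 < delta mu sigma Z).
  { unfold delta.
    assert (Ha : mu * Z <= mu) by nra. assert (Hb : Z ^ 2 <= 1) by (simpl; nra). assert (H1 : mu * Z + (sigma - 1) * Z ^ 2 < sigma) by nra.
    assert (E : 1 - mu / sigma * Z - (sigma - 1) / sigma * Z ^ 2
               = (sigma - (mu * Z + (sigma - 1) * Z ^ 2)) / sigma) by (field; lra).
    rewrite E. apply Rdiv_lt_0_compat; lra. }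
  set (d := delta mu sigma Z) in Hd.
  assert (E : Afun mu sigma Z + Bfun mu sigma Z
              = Z * (mu * (2 * sigma - 1) - Z * DD) / ((sigma - 1) * d)).
  { unfold Afun, Bfun. fold d. unfold DD. field. lra. }
  rewrite E.
  assert (Hden : 0 < (sigma - 1) * d) by nra.
  unfold Zstar; fold DD.
  split; intro H.
  - apply Rlt_gt. apply Rdiv_lt_0_compat; [|lra].
    apply Rmult_lt_0_compat; [lra|].
    apply Rmult_lt_compat_r with (r := DD) in H; [|lra].
    unfold Rdiv in H. rewrite Rmult_assoc, Rinv_l in H by lra. lra.
  - apply Rgt_lt in H.
    apply Rmult_lt_compat_r with (r := DD) in H; [|lra].
    unfold Rdiv in H. rewrite Rmult_assoc, Rinv_l in H by lra.
    assert (Z * (mu * (2 * sigma - 1) - Z * DD) < 0) by nra.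
    unfold Rdiv. apply Rmult_neg_pos; [lra|]. apply Rinv_0_lt_compat; lra.
Qed.
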